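(* Let $N\ge1$, $\lambda_1,\dots,\lambda_N$ distinct real numbers, $\mu_1,\dots,\mu_N$ nonzero real constants, $A=\mathrm{diag}(\lambda_1,\dots,\lambda_N)$, $B=\mathrm{diag}(\mu_1,\dots,\mu_N)$. Define functions on $\mathbb{R}^{6N}$ by \[F_1=-8(\langle P_1,BQ_1\rangle-\langle P_3,BQ_3\rangle),\] and for $m\ge2$ \[\begin{aligned}F_m=&\,4\sum_{i=1}^{m-1}\Big[(\langle A^{i-1}P_1,BQ_1\rangle-\langle A^{i-1}P_3,BQ_3\rangle)(\langle A^{m-i-1}P_1,BQ_1\rangle-\langle A^{m-i-1}P_3,BQ_3\rangle)\\ &\quad+2(\langle A^{i-1}P_1,BQ_2\rangle+\langle A^{i-1}P_2,BQ_3\rangle)(\langle A^{m-i-1}P_2,BQ_1\rangle+\langle A^{m-i-1}P_3,BQ_2\rangle)\Big]\\ &-8(\langle A^{m-1}P_1,BQ_1\rangle-\langle A^{m-1}P_3,BQ_3\rangle).\end{aligned}\] Then every $F_m$, $m\ge1$, is an integral of motion of the nonlinearized spatial system \[ \begin{pmatrix}\phi_{1j}\\ \phi_{2j}\\ \phi_{3j}\end{pmatrix}_x=U(\tilde u,\lambda_j)\begin{pmatrix}\phi_{1j}\\ \phi_{2j}\\ \phi_{3j}\end{pmatrix},\qquad \begin{pmatrix}\psi_{1j}\\ \psi_{2j}\\ \psi_{3j}\end{pmatrix}_x=-U(\tilde u,\lambda_j)^T\begin{pmatrix}\psi_{1j}\\ \psi_{2j}\\ \psi_{3j}\end{pmatrix},\quad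 j=1,\dots,N, \] with $\tilde u=(\tilde q,\tilde r)^T$, $\tilde q=\sqrt2(\langle P_1,BQ_2\rangle+\langle P_2,BQ_3\rangle)$, $\tilde r=\sqrt2(\langle P_2,BQ_1\rangle+\langle P_3,BQ_2\rangle)$. Moreover, together with $\bar F_j=\sum_{i=1}^3\phi_{ij}\psi_{ij}$, $1\le j\le N$, they form an involutive system: \[\{F_k,F_l\}=\{F_m,\bar F_j\}=0,\qquad m,k,l\ge1,\ 1\le j\le N.\]
   Context: On $\mathbb{R}^{6N}$ with coordinates $\phi_{ij},\psi_{ij}$ ($i=1,2,3$, $j=1,\dots,N$), $P_i=(\phi_{i1},\dots,\phi_{iN})^T$, $Q_i=(\psi_{i1},\dots,\psi_{iN})^T$; $\langle\cdot,\cdot\rangle$ is the standard inner product on $\mathbb{R}^N$. For $u=(q,r)^T$, $U(u,\lambda)=\begin{pmatrix}-2\lambda&\sqrt2 q&0\\ \sqrt2 r&0&\sqrt2 q\\ 0&\sqrt2 r&2\lambda\end{pmatrix}$. The Poisson bracket is $\{F,G\}=\sum_{i=1}^3\big(\langle \tfrac{\partial F}{\partial Q_i},B^{-1}\tfrac{\partial G}{\partial P_i}\rangle-\langle \tfrac{\partial F}{\partial P_i},B^{-1}\tfrac{\partial G}{\partial Q_i}\rangle\big)$ with $\frac{\partial}{\partial P_i}=(\frac{\partial}{\partial\phi_{i1}},\dots,\frac{\partial}{\partial\phi_{iN}})^T$, similarly for $Q_i$. *)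

(* Defs.v *)
From HB Require Import structures.
From mathcomp Require Import all_boot all_order all_algebra.
From mathcomp Require Import all_classical all_reals all_analysis.
Set Implicit Arguments. Unset Strict Implicit. Unset Printing Implicit Defensive.
Import Order.TTheory GRing.Theory Num.Theory.
Local Open Scope ring_scope.

Section Defs.
Variables (R : realType) (N : nat).

(* A point of R^{6N}: phi_{ij} = z.1 i j, psi_{ij} = z.2 i j,
   with i : 'I_3 (i = 1,2,3 is ordinal 0,1,2) and j : 'I_N. *)
Definition state := (('I_3 -> 'I_N -> R) * ('I_3 -> 'I_N -> R))%type.

Definition i1 : 'I_3 := Ordinal (isT : (0 < 3)%N).
Definition i2 : 'I_3 := Ordinal (isT : (1 < 3)%N).
Definition i3 : 'I_3 := Ordinal (isT : (2 < 3)%N).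

Definition Pv (z : state) (i : 'I_3) : 'cV[R]_N := \col_j z.1 i j.
Definition Qv (z : state) (i : 'I_3) : 'cV[R]_N := \col_j z.2 i j.

Definition inner (u v : 'cV[R]_N) : R := (u^T *m v) ord0 ord0.

Definition diagM (d : 'I_N -> R) : 'M[R]_N := diag_mx (\row_j d j).

Definition Uentry (q r lam : R) (i k : 'I_3) : R :=
  match nat_of_ord i, nat_of_ord k with
  | 0, 0 => - 2 * lam
  | 0, 1 => Num.sqrt 2 * q
  | 1, 0 => Num.sqrt 2 * r
  | 1, 2 => Num.sqrt 2 * q
  | 2, 1 => Num.sqrt 2 * r
  | 2, 2 => 2 * lam
  | _, _ => 0
  end.
Definition Umat (q r lam : R) : 'M[R]_3 := \matrix_(i, k) Uentry q r lam i k.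

Variables (lam mu : 'I_N -> R).
Let A := diagM lam.
Let B := diagM mu.

Definition ipAB (k : nat) (z : state) (a b : 'I_3) : R :=
  inner ((A ^+ k) *m Pv z a) (B *m Qv z b).

Definition Fint (m : nat) (z : state) : R :=
  if m == 1%N then - 8 * (ipAB 0 z i1 i1 - ipAB 0 z i3 i3)
  else
    4 * \sum_(1 <= i < m)
        ((ipAB i.-1 z i1 i1 - ipAB i.-1 z i3 i3)
           * (ipAB (m - i).-1 z i1 i1 - ipAB (m - i).-1 z i3 i3)
         + 2 * (ipAB i.-1 z i1 i2 + ipAB i.-1 z i2 i3)
             * (ipAB (m - i).-1 z i2 i1 + ipAB (m - i).-1 z i3 i2))
    - 8 * (ipAB m.-1 z i1 i1 - ipAB m.-1 z i3 i3).

Definition Fbar (j : 'I_N) (z : state) : R := \sum_(i < 3) z.1 i j * z.2 i j.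

Definition qt (z : state) : R :=
  Num.sqrt 2 * (inner (Pv z i1) (B *m Qv z i2) + inner (Pv z i2) (B *m Qv z i3)).
Definition rt (z : state) : R :=
  Num.sqrt 2 * (inner (Pv z i2) (B *m Qv z i1) + inner (Pv z i3) (B *m Qv z i2)).

Definition phicol (z : state) (j : 'I_N) : 'cV[R]_3 := \col_i z.1 i j.
Definition psicol (z : state) (j : 'I_N) : 'cV[R]_3 := \col_i z.2 i j.

Definition is_solution (sol : R -> state) : Prop :=
  forall (x : R) (i : 'I_3) (j : 'I_N),
    derivable (fun t => (sol t).1 i j) x 1 /\
    derivable (fun t => (sol t).2 i j) x 1 /\
    derive1 (fun t => (sol t).1 i j) x
      = (Umat (qt (sol x)) (rt (sol x)) (lam j) *m phicol (sol x) j) i ord0 /\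
    derive1 (fun t => (sol t).2 i j) x
      = ((- (Umat (qt (sol x)) (rt (sol x)) (lam j))^T) *m psicol (sol x) j) i ord0.

Definition integral_of_motion (F : state -> R) : Prop :=
  forall sol : R -> state, is_solution sol -> forall x y : R, F (sol x) = F (sol y).

Definition upd_phi (z : state) (i : 'I_3) (j : 'I_N) (t : R) : state :=
  (fun a b => if (a == i) && (b == j) then t else z.1 a b, z.2).
Definition upd_psi (z : state) (i : 'I_3) (j : 'I_N) (t : R) : state :=
  (z.1, fun a b => if (a == i) && (b == j) then t else z.2 a b).

Definition dP (F : state -> R) (z : state) (i : 'I_3) : 'cV[R]_N :=
  \col_j derive1 (fun t => F (upd_phi z i j t)) (z.1 i j).
Definition dQ (F : state -> R) (z : state) (i : 'I_3) : 'cV[R]_N :=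
  \col_j derive1 (fun t => F (upd_psi z i j t)) (z.2 i j).

Definition Binv : 'M[R]_N := diagM (fun j => (mu j)^-1).

Definition pbracket (F G : state -> R) (z : state) : R :=
  \sum_(i < 3) (inner (dQ F z i) (Binv *m dP G z i)
                - inner (dP F z i) (Binv *m dQ G z i)).

End Defs.

(* Main.v *)
Require Import Defs.
From HB Require Import structures.
From mathcomp Require Import all_boot all_order all_algebra.
From mathcomp Require Import all_classical all_reals all_analysis.
From mathcomp Require Import ring lra zify.
Import Order.TTheory GRing.Theory Num.Theory.
Local Open Scope ring_scope.

Module A.

Section Work.
Context {R : realType} {N : nat} {lam mu : 'I_N -> R}.
Local Notation st := (state R N).

Lemma d1M (f g : R -> R) x : derivable f x 1 -> derivable g x 1 ->
  derivable (fun t => f t * g t) x 1 /\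
  derive1 (fun t => f t * g t) x = derive1 f x * g x + f x * derive1 g x.
Proof.
move=> df dg; split; first exact: (derivableM df dg).
rewrite !derive1E.
have -> : (fun t => f t * g t) = (f * g)%R by [].
rewrite deriveM; [|exact: df|exact: dg]. rewrite /GRing.scale /=. ring.
Qed.

Lemma d1D (f g : R -> R) x : derivable f x 1 -> derivable g x 1 ->
  derivable (fun t => f t + g t) x 1 /\
  derive1 (fun t => f t + g t) x = derive1 f x + derive1 g x.
Proof.
move=> df dg; split; first exact: (derivableD df dg).
rewrite !derive1E.
have -> : (fun t => f t + g t) = (f + g)%R by [].
by rewrite deriveD; [|exact: df|exact: dg].
Qed.

Arguments d1M {f g x}.
Arguments d1D {f g x}.

Lemma d1C (c : R) x : derivable (fun _ : R => c) x 1 /\ derive1 (fun _ : R => c) x = 0.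
Proof.
split; first exact: derivable_cst.
by rewrite derive1E derive_cst.
Qed.

Lemma d1id x : derivable (fun t : R => t) x 1 /\ derive1 (fun t : R => t) x = 1.
Proof.
split; first exact: derivable_id.
by rewrite derive1E derive_id.
Qed.


Definition dp (F : st -> R) z i j := derive1 (fun t => F (upd_phi z i j t)) (z.1 i j).
Definition dq (F : st -> R) z i j := derive1 (fun t => F (upd_psi z i j t)) (z.2 i j).

Definition smooth (F : st -> R) := forall z i j,
  derivable (fun t => F (upd_phi z i j t)) (z.1 i j) 1 /\
  derivable (fun t => F (upd_psi z i j t)) (z.2 i j) 1.

Definition curve_ok (sol : R -> st) x := forall i j,
  derivable (fun t => (sol t).1 i j) x 1 /\ derivable (fun t => (sol t).2 i j) x 1.

Definition chain (F : st -> R) := forall sol x, curve_ok sol x ->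
  derivable (fun t => F (sol t)) x 1 /\
  derive1 (fun t => F (sol t)) x = \sum_i \sum_j
     (dp F (sol x) i j * derive1 (fun t => (sol t).1 i j) x
      + dq F (sol x) i j * derive1 (fun t => (sol t).2 i j) x).

Definition good F := smooth F /\ chain F.

Lemma dp_add F G z i j : smooth F -> smooth G ->
  dp (fun z => F z + G z) z i j = dp F z i j + dp G z i j.
Proof. by move=> hF hG; rewrite /dp; case: (d1D (proj1 (hF z i j)) (proj1 (hG z i j))). Qed.
Lemma dq_add F G z i j : smooth F -> smooth G ->
  dq (fun z => F z + G z) z i j = dq F z i j + dq G z i j.
Proof. by move=> hF hG; rewrite /dq; case: (d1D (proj2 (hF z i j)) (proj2 (hG z i j))). Qed.

Lemma upd_phi_id (z : st) i j : upd_phi z i j (z.1 i j) = z.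
Proof.
case: z => z1 z2; rewrite /upd_phi /=; congr pair.
apply/funext => a; apply/funext => b.
by case: eqP => [->|//]; case: eqP => [->|].
Qed.
Lemma upd_psi_id (z : st) i j : upd_psi z i j (z.2 i j) = z.
Proof.
case: z => z1 z2; rewrite /upd_psi /=; congr pair.
apply/funext => a; apply/funext => b.
by case: eqP => [->|//]; case: eqP => [->|].
Qed.

Lemma dp_mul F G z i j : smooth F -> smooth G ->
  dp (fun z => F z * G z) z i j = dp F z i j * G z + F z * dp G z i j.
Proof.
move=> hF hG; rewrite /dp; case: (d1M (proj1 (hF z i j)) (proj1 (hG z i j))) => _ ->.
by rewrite upd_phi_id.
Qed.
Lemma dq_mul F G z i j : smooth F -> smooth G ->
  dq (fun z => F z * G z) z i j = dq F z i j * G z + F z * dq G z i j.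
Proof.
move=> hF hG; rewrite /dq; case: (d1M (proj2 (hF z i j)) (proj2 (hG z i j))) => _ ->.
by rewrite upd_psi_id.
Qed.

Lemma dp_const c z i j : dp (fun _ => c) z i j = 0.
Proof. by rewrite /dp; case: (d1C c (z.1 i j)). Qed.
Lemma dq_const c z i j : dq (fun _ => c) z i j = 0.
Proof. by rewrite /dq; case: (d1C c (z.2 i j)). Qed.

Lemma coordP_line (z : st) i j a b :
  (fun t => (upd_phi z i j t).1 a b) =
  if (a == i) && (b == j) then (fun t => t) else (fun _ => z.1 a b).
Proof. by rewrite /upd_phi /=; case: ifP. Qed.
Lemma coordQ_line (z : st) i j a b :
  (fun t => (upd_psi z i j t).2 a b) =
  if (a == i) && (b == j) then (fun t => t) else (fun _ => z.2 a b).
Proof. by rewrite /upd_psi /=; case: ifP. Qed.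

Lemma dp_P a b z i j : dp (fun z : st => z.1 a b) z i j = ((a == i) && (b == j))%:R.
Proof.
rewrite /dp coordP_line; case: ifP => _; first by case: (d1id (z.1 i j)).
by case: (d1C (z.1 a b) (z.1 i j)).
Qed.
Lemma dq_P a b z i j : dq (fun z : st => z.1 a b) z i j = 0.
Proof. exact: dq_const. Qed.
Lemma dq_Q a b z i j : dq (fun z : st => z.2 a b) z i j = ((a == i) && (b == j))%:R.
Proof.
rewrite /dq coordQ_line; case: ifP => _; first by case: (d1id (z.2 i j)).
by case: (d1C (z.2 a b) (z.2 i j)).
Qed.
Lemma dp_Q a b z i j : dp (fun z : st => z.2 a b) z i j = 0.
Proof. exact: dp_const. Qed.

Lemma smooth_const c : smooth (fun _ => c).
Proof. by move=> z i j; split; apply: derivable_cst. Qed.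
Lemma smooth_P a b : smooth (fun z : st => z.1 a b).
Proof.
move=> z i j; split; last exact: derivable_cst.
rewrite coordP_line; case: ifP => _; [exact: derivable_id | exact: derivable_cst].
Qed.
Lemma smooth_Q a b : smooth (fun z : st => z.2 a b).
Proof.
move=> z i j; split; first exact: derivable_cst.
rewrite coordQ_line; case: ifP => _; [exact: derivable_id | exact: derivable_cst].
Qed.
Lemma smooth_add F G : smooth F -> smooth G -> smooth (fun z => F z + G z).
Proof.
move=> hF hG z i j; split; [exact: (proj1 (d1D (proj1 (hF z i j)) (proj1 (hG z i j))))
  | exact: (proj1 (d1D (proj2 (hF z i j)) (proj2 (hG z i j))))].
Qed.
Lemma smooth_mul F G : smooth F -> smooth G -> smooth (fun z => F z * G z).
Proof.
move=> hF hG z i j; split; [exact: (proj1 (d1M (proj1 (hF z i j)) (proj1 (hG z i j))))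
  | exact: (proj1 (d1M (proj2 (hF z i j)) (proj2 (hG z i j))))].
Qed.

Lemma sum_delta2 (f : 'I_3 -> 'I_N -> R) a b :
  \sum_i \sum_j (((a == i) && (b == j))%:R * f i j) = f a b.
Proof.
rewrite (bigD1 a) //=.
rewrite [X in _ + X]big1 => [|i ia]; last first.
  by apply: big1 => j _; rewrite eq_sym (negbTE ia) /= mul0r.
rewrite addr0 (bigD1 b) //=.
rewrite [X in _ + X]big1 => [|j jb]; last by rewrite eqxx eq_sym (negbTE jb) /= mul0r.
by rewrite !eqxx mul1r addr0.
Qed.

Lemma chain_const c : chain (fun _ => c).
Proof.
move=> sol x _; case: (d1C c x) => h1 h2; split => //.
rewrite h2; symmetry; apply: big1 => i _; apply: big1 => j _.
by rewrite dp_const dq_const !mul0r addr0.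
Qed.
Lemma chain_P a b : chain (fun z : st => z.1 a b).
Proof.
move=> sol x hs; split; first exact: (proj1 (hs a b)).
under eq_bigr do under eq_bigr do rewrite dp_P dq_P mul0r addr0.
by rewrite sum_delta2.
Qed.
Lemma chain_Q a b : chain (fun z : st => z.2 a b).
Proof.
move=> sol x hs; split; first exact: (proj2 (hs a b)).
under eq_bigr do under eq_bigr do rewrite dq_Q dp_Q mul0r add0r.
by rewrite sum_delta2.
Qed.
Lemma chain_add F G : smooth F -> smooth G -> chain F -> chain G ->
  chain (fun z => F z + G z).
Proof.
move=> sF sG cF cG sol x hs; case: (cF sol x hs) => dF eF; case: (cG sol x hs) => dG eG.
case: (d1D dF dG) => h1 h2; split => //; rewrite h2 eF eG -big_split /=.
apply: eq_bigr => i _; rewrite -big_split; apply: eq_bigr => j _ /=.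
rewrite dp_add // dq_add //; ring.
Qed.
Lemma chain_mul F G : smooth F -> smooth G -> chain F -> chain G ->
  chain (fun z => F z * G z).
Proof.
move=> sF sG cF cG sol x hs; case: (cF sol x hs) => dF eF; case: (cG sol x hs) => dG eG.
case: (d1M dF dG) => h1 h2; split => //; rewrite h2 eF eG.
rewrite mulr_suml mulr_sumr -big_split /=.
apply: eq_bigr => i _; rewrite mulr_suml mulr_sumr -big_split; apply: eq_bigr => j _ /=.
rewrite dp_mul // dq_mul //; ring.
Qed.

Lemma good_const c : good (fun _ => c).
Proof. split; [exact: smooth_const | exact: chain_const]. Qed.
Lemma good_P a b : good (fun z : st => z.1 a b).
Proof. split; [exact: smooth_P | exact: chain_P]. Qed.
Lemma good_Q a b : good (fun z : st => z.2 a b).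
Proof. split; [exact: smooth_Q | exact: chain_Q]. Qed.
Lemma good_add F G : good F -> good G -> good (fun z => F z + G z).
Proof. move=> [sF cF] [sG cG]; split; [exact: smooth_add | exact: chain_add]. Qed.
Lemma good_mul F G : good F -> good G -> good (fun z => F z * G z).
Proof. move=> [sF cF] [sG cG]; split; [exact: smooth_mul | exact: chain_mul]. Qed.

Lemma good_ext F G : (forall z, F z = G z) -> good F -> good G.
Proof. by move=> e; have -> : F = G by apply/funext. Qed.

Arguments good_ext {F G}.
Arguments good_add {F G}.
Arguments good_mul {F G}.

Lemma good_sum (I : Type) (r : seq I) (P : pred I) (F : I -> st -> R) :
  (forall i, P i -> good (F i)) -> good (fun z => \sum_(i <- r | P i) F i z).
Proof.
move=> hF; elim: r => [|a r IH].
  by apply: (good_ext _ (good_const 0)) => z; rewrite big_nil.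
case Pa: (P a).
  eapply good_ext; last exact: (good_add (hF a Pa) IH).
  by move=> z /=; rewrite big_cons Pa.
by apply: (good_ext _ IH) => z; rewrite big_cons Pa.
Qed.

Lemma good_opp F : good F -> good (fun z => - F z).
Proof.
move=> h; apply: (good_ext _ (good_mul (good_const (-1)) h)) => z; ring.
Qed.
Lemma good_sub F G : good F -> good G -> good (fun z => F z - G z).
Proof. by move=> hF hG; apply: good_add => //; apply: good_opp. Qed.


Lemma dp_ext F G z i j : (forall z, F z = G z) -> dp F z i j = dp G z i j.
Proof. by move=> e; have -> : F = G by apply/funext. Qed.
Lemma dq_ext F G z i j : (forall z, F z = G z) -> dq F z i j = dq G z i j.
Proof. by move=> e; have -> : F = G by apply/funext. Qed.

Lemma sum_ext_smooth (I : Type) (r : seq I) (P : pred I) (F : I -> st -> R) :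
  (forall i, P i -> smooth (F i)) ->
  smooth (fun z => \sum_(i <- r | P i) F i z) /\
  (forall z i j, dp (fun z => \sum_(k <- r | P k) F k z) z i j = \sum_(k <- r | P k) dp (F k) z i j) /\
  (forall z i j, dq (fun z => \sum_(k <- r | P k) F k z) z i j = \sum_(k <- r | P k) dq (F k) z i j).
Proof.
move=> hF; elim: r => [|a r [IH1 [IH2 IH3]]].
  have e : forall z, \sum_(i <- [::] | P i) F i z = (fun _ => 0) z by move=> z; rewrite big_nil.
  have -> : (fun z => \sum_(i <- [::] | P i) F i z) = (fun _ => 0)
    by apply/funext => z; rewrite big_nil.
  split; first exact: smooth_const.
  split=> z i j; rewrite big_nil; [exact: dp_const | exact: dq_const].
case Pa: (P a).
  have e : forall z, \sum_(i <- a :: r | P i) F i z = F a z + \sum_(i <- r | P i) F i z.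
    by move=> z; rewrite big_cons Pa.
  have -> : (fun z => \sum_(i <- a :: r | P i) F i z) = (fun z => F a z + \sum_(i <- r | P i) F i z)
    by apply/funext => z; exact: e.
  split; first exact: smooth_add (hF a Pa) IH1.
  split=> z i j; rewrite big_cons Pa.
    by rewrite dp_add; [rewrite IH2|exact: hF a Pa|exact: IH1].
  by rewrite dq_add; [rewrite IH3|exact: hF a Pa|exact: IH1].
have -> : (fun z => \sum_(i <- a :: r | P i) F i z) = (fun z => \sum_(i <- r | P i) F i z)
  by apply/funext => z; rewrite big_cons Pa.
by split=> //; split=> z i j; rewrite big_cons Pa; [exact: IH2 | exact: IH3].
Qed.

Lemma innerB (u w : 'cV[R]_N) (d : 'I_N -> R) :
  inner u (diagM d *m w) = \sum_j u j 0 * d j * w j 0.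
Proof.
rewrite /inner /diagM mul_diag_mx mxE; apply: eq_bigr => j _; rewrite !mxE; ring.
Qed.

Definition pb (F G : st -> R) z :=
  \sum_i \sum_j (mu j)^-1 * (dq F z i j * dp G z i j - dp F z i j * dq G z i j).

Lemma pbE F G z : pbracket mu F G z = pb F G z.
Proof.
rewrite /pbracket /pb; apply: eq_bigr => i _.
rewrite /Binv !innerB -sumrB; apply: eq_bigr => j _; rewrite /dP /dQ !mxE /dp /dq; ring.
Qed.

Lemma pb_anti F G z : pb G F z = - pb F G z.
Proof.
rewrite /pb -sumrN; apply: eq_bigr => i _; rewrite -sumrN; apply: eq_bigr => j _; ring.
Qed.

Lemma pb_extL F F' G z : (forall z, F z = F' z) -> pb F G z = pb F' G z.
Proof. by move=> e; have -> : F = F' by apply/funext. Qed.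
Lemma pb_extR F G G' z : (forall z, G z = G' z) -> pb F G z = pb F G' z.
Proof. by move=> e; have -> : G = G' by apply/funext. Qed.

Lemma pb_addL F F' G z : smooth F -> smooth F' ->
  pb (fun z => F z + F' z) G z = pb F G z + pb F' G z.
Proof.
move=> h h'; rewrite /pb -big_split; apply: eq_bigr => i _; rewrite -big_split.
apply: eq_bigr => j _ /=; rewrite dp_add // dq_add //; ring.
Qed.

Lemma pb_mulL F F' G z : smooth F -> smooth F' ->
  pb (fun z => F z * F' z) G z = F z * pb F' G z + F' z * pb F G z.
Proof.
move=> h h'; rewrite /pb !mulr_sumr -big_split; apply: eq_bigr => i _.
rewrite !mulr_sumr -big_split.
apply: eq_bigr => j _ /=; rewrite dp_mul // dq_mul //; ring.
Qed.

Lemma pb_constL c G z : pb (fun _ => c) G z = 0.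
Proof.
rewrite /pb big1 // => i _; rewrite big1 // => j _; rewrite dp_const dq_const; ring.
Qed.

Lemma pb_sumL (I : Type) (r : seq I) (P : pred I) (F : I -> st -> R) G z :
  (forall i, P i -> smooth (F i)) ->
  pb (fun z => \sum_(i <- r | P i) F i z) G z = \sum_(i <- r | P i) pb (F i) G z.
Proof.
move=> hF; have [_ [h2 h3]] := @sum_ext_smooth I r P F hF.
rewrite /pb; under eq_bigr do under eq_bigr do rewrite h2 h3.
symmetry; rewrite exchange_big /=; apply: eq_bigr => i _.
rewrite exchange_big /=; apply: eq_bigr => j _.
rewrite !mulr_suml -sumrB mulr_sumr; apply: eq_bigr => k _; ring.
Qed.

Lemma Apow_col k (v : 'cV[R]_N) j : ((diagM lam ^+ k) *m v) j 0 = lam j ^+ k * v j 0.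
Proof.
elim: k => [|k IH]; first by rewrite expr0 mul1mx expr0 mul1r.
by rewrite exprS -mulmxE -mulmxA {1}/diagM mul_diag_mx mxE IH mxE exprS mulrA.
Qed.

Lemma ipABE k z a b : ipAB lam mu k z a b = \sum_j lam j ^+ k * mu j * z.1 a j * z.2 b j.
Proof.
rewrite /ipAB /inner mxE; apply: eq_bigr => j _.
rewrite mxE Apow_col /diagM mul_diag_mx !mxE; ring.
Qed.


Lemma sum_delta1 (f : 'I_N -> R) j : \sum_k ((k == j)%:R * f k) = f j.
Proof.
rewrite (bigD1 j) //= eqxx mul1r big1 ?addr0 // => k kj.
by rewrite (negbTE kj) mul0r.
Qed.

Lemma smooth_ip k a b : smooth (fun z => ipAB lam mu k z a b).
Proof.
have -> : (fun z => ipAB lam mu k z a b) =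
   (fun z => \sum_j (lam j ^+ k * mu j * z.1 a j) * z.2 b j).
  by apply/funext => z; rewrite ipABE.
have := @sum_ext_smooth _ (index_enum 'I_N) xpredT
  (fun j z => (lam j ^+ k * mu j * z.1 a j) * z.2 b j).
case=> [j _|//]; apply: smooth_mul; last exact: smooth_Q.
apply: smooth_mul; [exact: smooth_const | exact: smooth_P].
Qed.

Lemma good_ip k a b : good (fun z => ipAB lam mu k z a b).
Proof.
apply: (good_ext (fun z => esym (ipABE k z a b))).
apply: good_sum => j _; apply: good_mul; last exact: good_Q.
apply: good_mul; [exact: good_const | exact: good_P].
Qed.

Lemma dp_ip k a b z i j :
  dp (fun z => ipAB lam mu k z a b) z i j = (a == i)%:R * (lam j ^+ k * mu j * z.2 b j).
Proof.
rewrite (dp_ext _ _ _ _ _ (fun z => ipABE k z a b)).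
have := @sum_ext_smooth _ (index_enum 'I_N) xpredT
  (fun j z => (lam j ^+ k * mu j * z.1 a j) * z.2 b j).
case=> [j' _|_ [-> _]].
  apply: smooth_mul; last exact: smooth_Q.
  apply: smooth_mul; [exact: smooth_const | exact: smooth_P].
rewrite -(sum_delta1 (fun j' => (a == i)%:R * (lam j' ^+ k * mu j' * z.2 b j')) j).
apply: eq_bigr => j' _.
rewrite (dp_mul (fun z => lam j' ^+ k * mu j' * z.1 a j') (fun z => z.2 b j'));
  last exact: smooth_Q; last first.
  apply: smooth_mul; [exact: smooth_const | exact: smooth_P].
rewrite (dp_mul (fun _ => lam j' ^+ k * mu j') (fun z => z.1 a j'));
  [|exact: smooth_const|exact: smooth_P].
rewrite dp_const dp_P dp_Q.
by case: (a == i); case: (j' == j); rewrite /=; ring.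
Qed.

Lemma dq_ip k a b z i j :
  dq (fun z => ipAB lam mu k z a b) z i j = (b == i)%:R * (lam j ^+ k * mu j * z.1 a j).
Proof.
rewrite (dq_ext _ _ _ _ _ (fun z => ipABE k z a b)).
have := @sum_ext_smooth _ (index_enum 'I_N) xpredT
  (fun j z => (lam j ^+ k * mu j * z.1 a j) * z.2 b j).
case=> [j' _|_ [_ ->]].
  apply: smooth_mul; last exact: smooth_Q.
  apply: smooth_mul; [exact: smooth_const | exact: smooth_P].
rewrite -(sum_delta1 (fun j' => (b == i)%:R * (lam j' ^+ k * mu j' * z.1 a j')) j).
apply: eq_bigr => j' _.
rewrite (dq_mul (fun z => lam j' ^+ k * mu j' * z.1 a j') (fun z => z.2 b j'));
  last exact: smooth_Q; last first.
  apply: smooth_mul; [exact: smooth_const | exact: smooth_P].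
rewrite (dq_mul (fun _ => lam j' ^+ k * mu j') (fun z => z.1 a j'));
  [|exact: smooth_const|exact: smooth_P].
rewrite dq_const dq_P dq_Q.
by case: (b == i); case: (j' == j); rewrite /=; ring.
Qed.


Lemma delta3 (b c : 'I_3) (x : R) :
  \sum_(i : 'I_3) (b == i)%:R * (c == i)%:R * x = (b == c)%:R * x.
Proof.
rewrite (bigD1 b) //= eqxx big1 ?addr0 => [|i bi]; last by rewrite eq_sym (negbTE bi) !mul0r.
by rewrite eq_sym mul1r.
Qed.

Hypothesis hmu : forall j, mu j != 0.

Lemma pb_ip k a b l c d z :
  pb (fun z => ipAB lam mu k z a b) (fun z => ipAB lam mu l z c d) z =
  (b == c)%:R * ipAB lam mu (k + l) z a d - (a == d)%:R * ipAB lam mu (k + l) z c b.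
Proof.
rewrite /pb exchange_big /= !ipABE !mulr_sumr -sumrB; apply: eq_bigr => j _.
under eq_bigr do rewrite dq_ip dp_ip dp_ip dq_ip.
transitivity (\sum_(i : 'I_3) ((b == i)%:R * (c == i)%:R *
     ((mu j)^-1 * ((lam j ^+ k * mu j * z.1 a j) * (lam j ^+ l * mu j * z.2 d j))) -
   (a == i)%:R * (d == i)%:R *
     ((mu j)^-1 * ((lam j ^+ k * mu j * z.2 b j) * (lam j ^+ l * mu j * z.1 c j))))).
  by apply: eq_bigr => i _; ring.
rewrite sumrB !delta3 exprD; congr (_ * _ - _ * _); field; exact: hmu.
Qed.


Lemma pb_addR F G G' z : smooth G -> smooth G' ->
  pb F (fun z => G z + G' z) z = pb F G z + pb F G' z.
Proof. by move=> h h'; rewrite pb_anti pb_addL // (pb_anti G) (pb_anti G'); ring. Qed.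
Lemma pb_mulR F G G' z : smooth G -> smooth G' ->
  pb F (fun z => G z * G' z) z = G z * pb F G' z + G' z * pb F G z.
Proof. by move=> h h'; rewrite pb_anti pb_mulL // (pb_anti G) (pb_anti G'); ring. Qed.
Lemma pb_constR c F z : pb F (fun _ => c) z = 0.
Proof. by rewrite pb_anti pb_constL oppr0. Qed.
Lemma pb_sumR (I : Type) (r : seq I) (P : pred I) (G : I -> st -> R) F z :
  (forall i, P i -> smooth (G i)) ->
  pb F (fun z => \sum_(i <- r | P i) G i z) z = \sum_(i <- r | P i) pb F (G i) z.
Proof.
move=> h; rewrite pb_anti pb_sumL // -sumrN; apply: eq_bigr => i _.
by rewrite pb_anti opprK.
Qed.
Lemma pb_scaleL c F G z : smooth F -> pb (fun z => c * F z) G z = c * pb F G z.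
Proof. by move=> h; rewrite pb_mulL; [rewrite pb_constL; ring|exact: smooth_const|exact: h]. Qed.
Lemma pb_scaleR c F G z : smooth G -> pb F (fun z => c * G z) z = c * pb F G z.
Proof. by move=> h; rewrite pb_mulR; [rewrite pb_constR; ring|exact: smooth_const|exact: h]. Qed.
Lemma smooth_opp F : smooth F -> smooth (fun z => - F z).
Proof.
move=> h; have -> : (fun z => - F z) = (fun z => -1 * F z) by apply/funext => y; ring.
by apply: smooth_mul; [exact: smooth_const|exact: h].
Qed.
Lemma pb_subL F F' G z : smooth F -> smooth F' ->
  pb (fun z => F z - F' z) G z = pb F G z - pb F' G z.
Proof.
move=> h h'; rewrite pb_addL; [|exact: h|exact: smooth_opp h'].
have -> : (fun z => - F' z) = (fun z => -1 * F' z) by apply/funext => y; ring.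
by rewrite pb_scaleL //; ring.
Qed.
Lemma pb_subR F G G' z : smooth G -> smooth G' ->
  pb F (fun z => G z - G' z) z = pb F G z - pb F G' z.
Proof. by move=> h h'; rewrite pb_anti pb_subL // (pb_anti G) (pb_anti G'); ring. Qed.
Lemma smooth_sub F G : smooth F -> smooth G -> smooth (fun z => F z - G z).
Proof. by move=> h h'; apply: smooth_add; [exact: h|exact: smooth_opp h']. Qed.

Definition uf k (z : st) := ipAB lam mu k z i1 i1 - ipAB lam mu k z i3 i3.
Definition vf k (z : st) := ipAB lam mu k z i1 i2 + ipAB lam mu k z i2 i3.
Definition wf k (z : st) := ipAB lam mu k z i2 i1 + ipAB lam mu k z i3 i2.

Lemma good_u k : good (uf k).
Proof. by apply: good_sub; apply: good_ip. Qed.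
Lemma good_v k : good (vf k).
Proof. by apply: good_add; apply: good_ip. Qed.
Lemma good_w k : good (wf k).
Proof. by apply: good_add; apply: good_ip. Qed.
Lemma smooth_u k : smooth (uf k). Proof. exact: (proj1 (good_u k)). Qed.
Lemma smooth_v k : smooth (vf k). Proof. exact: (proj1 (good_v k)). Qed.
Lemma smooth_w k : smooth (wf k). Proof. exact: (proj1 (good_w k)). Qed.
Lemma smooth_ip' k a b : smooth (fun z => ipAB lam mu k z a b). Proof. exact: smooth_ip. Qed.

End Work.

End A.
Import A.

Module B.
Import A.

Section B.
Context {R : realType} {N : nat} {lam mu : 'I_N -> R}.
Hypothesis hmu : forall j, mu j != 0.
Local Notation st := (state R N).
Local Notation u := (@uf R N lam mu).
Local Notation v := (@vf R N lam mu).
Local Notation w := (@wf R N lam mu).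
Local Notation ip k a b := (fun z => @ipAB R N lam mu k z a b).
Local Notation pb := (@pb R N mu).

Lemma spip k a b : smooth (ip k a b). Proof. exact: smooth_ip. Qed.
Hint Resolve spip : core.

Ltac pbexp := rewrite /uf /vf /wf;
  rewrite ?(pb_subL _ _ _ _ (spip _ _ _) (spip _ _ _)) ?(pb_addL _ _ _ _ (spip _ _ _) (spip _ _ _));
  rewrite ?(pb_subR _ _ _ _ (spip _ _ _) (spip _ _ _)) ?(pb_addR _ _ _ _ (spip _ _ _) (spip _ _ _));
  rewrite !(pb_ip hmu) /=.

Lemma pb_uu k l z : pb (u k) (u l) z = 0.
Proof. pbexp. ring. Qed.

Lemma pb_vv k l z : pb (v k) (v l) z = 0.
Proof. pbexp. ring. Qed.
Lemma pb_ww k l z : pb (w k) (w l) z = 0.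
Proof. pbexp. ring. Qed.
Lemma pb_uv k l z : pb (u k) (v l) z = v (k + l) z.
Proof. pbexp. rewrite /vf. ring. Qed.
Lemma pb_uw k l z : pb (u k) (w l) z = - w (k + l) z.
Proof. pbexp. rewrite /wf. ring. Qed.
Lemma pb_vw k l z : pb (v k) (w l) z = u (k + l) z.
Proof. pbexp. rewrite /uf. ring. Qed.
Lemma pb_vu k l z : pb (v k) (u l) z = - v (k + l) z.
Proof. by rewrite pb_anti pb_uv addnC. Qed.
Lemma pb_wu k l z : pb (w k) (u l) z = w (k + l) z.
Proof. by rewrite pb_anti pb_uw opprK addnC. Qed.
Lemma pb_wv k l z : pb (w k) (v l) z = - u (k + l) z.
Proof. by rewrite pb_anti pb_vw addnC. Qed.


Lemma pb_mul2 F1 F2 G1 G2 z : smooth F1 -> smooth F2 -> smooth G1 -> smooth G2 ->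
  pb (fun z => F1 z * F2 z) (fun z => G1 z * G2 z) z =
  F1 z * (G1 z * pb F2 G2 z + G2 z * pb F2 G1 z) +
  F2 z * (G1 z * pb F1 G2 z + G2 z * pb F1 G1 z).
Proof.
move=> h1 h2 h3 h4.
rewrite pb_mulL; [|exact: h1|exact: h2].
by rewrite !pb_mulR; [ring|exact: h3|exact: h4|exact: h3|exact: h4].
Qed.

Definition K i j : st -> R := fun z => u i z * u j z + 2 * (v i z * w j z).

Lemma smooth_uu i j : smooth (fun z => u i z * u j z).
Proof. apply: smooth_mul; exact: smooth_u. Qed.
Lemma smooth_vw i j : smooth (fun z => v i z * w j z).
Proof. apply: smooth_mul; [exact: smooth_v|exact: smooth_w]. Qed.
Lemma smooth_2vw i j : smooth (fun z => 2 * (v i z * w j z)).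
Proof. apply: smooth_mul; [exact: smooth_const|exact: smooth_vw]. Qed.
Lemma smooth_K i j : smooth (K i j).
Proof. apply: smooth_add; [exact: smooth_uu|exact: smooth_2vw]. Qed.

Lemma pbK i j a b z : pb (K i j) (K a b) z =
  pb (fun z => u i z * u j z) (fun z => u a z * u b z) z
  + 2 * pb (fun z => u i z * u j z) (fun z => v a z * w b z) z
  + 2 * pb (fun z => v i z * w j z) (fun z => u a z * u b z) z
  + 4 * pb (fun z => v i z * w j z) (fun z => v a z * w b z) z.
Proof.
rewrite /K pb_addL; [|exact: smooth_uu|exact: smooth_2vw].
rewrite pb_scaleL; last exact: smooth_vw.
rewrite !(pb_addR _ (fun z => u a z * u b z) (fun z => 2 * (v a z * w b z)) _
  (smooth_uu a b) (smooth_2vw a b)).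
rewrite !(pb_scaleR 2 _ (fun z => v a z * w b z) _ (smooth_vw a b)).
ring.
Qed.

Definition T p q r (z : st) :=
  u p z * (v q z * w r z - w q z * v r z) - v p z * (u q z * w r z - w q z * u r z)
  + w p z * (u q z * v r z - v q z * u r z).

Lemma pb_uuuu i j a b z : pb (fun z => u i z * u j z) (fun z => u a z * u b z) z = 0.
Proof.
rewrite (pb_mul2 (u i) (u j) (u a) (u b) z (smooth_u i) (smooth_u j) (smooth_u a) (smooth_u b)).
by rewrite !pb_uu; ring.
Qed.
Lemma pb_uuvw i j a b z : pb (fun z => u i z * u j z) (fun z => v a z * w b z) z =
  u i z * (v a z * - w (j + b) z + w b z * v (j + a) z) +
  u j z * (v a z * - w (i + b) z + w b z * v (i + a) z).
Proof.
rewrite (pb_mul2 (u i) (u j) (v a) (w b) z (smooth_u i) (smooth_u j) (smooth_v a) (smooth_w b)).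
by rewrite !pb_uv !pb_uw.
Qed.
Lemma pb_vwuu i j a b z : pb (fun z => v i z * w j z) (fun z => u a z * u b z) z =
  v i z * (u a z * w (j + b) z + u b z * w (j + a) z) +
  w j z * (u a z * - v (i + b) z + u b z * - v (i + a) z).
Proof.
rewrite (pb_mul2 (v i) (w j) (u a) (u b) z (smooth_v i) (smooth_w j) (smooth_u a) (smooth_u b)).
by rewrite !pb_vu !pb_wu.
Qed.
Lemma pb_vwvw i j a b z : pb (fun z => v i z * w j z) (fun z => v a z * w b z) z =
  v i z * (v a z * 0 + w b z * - u (j + a) z) +
  w j z * (v a z * u (i + b) z + w b z * 0).
Proof.
rewrite (pb_mul2 (v i) (w j) (v a) (w b) z (smooth_v i) (smooth_w j) (smooth_v a) (smooth_w b)).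
by rewrite pb_ww pb_wv pb_vw pb_vv.
Qed.

Lemma Ksym i j a b z :
  pb (K i j) (K a b) z + pb (K j i) (K a b) z + pb (K i j) (K b a) z + pb (K j i) (K b a) z
  = -4 * (T (i + a) j b z + T (i + b) j a z + T (j + a) i b z + T (j + b) i a z).
Proof.
rewrite !pbK !pb_uuuu !pb_uuvw !pb_vwuu !pb_vwvw /T.
ring.
Qed.

End B.

End B.
Import B.

Module D.
Import A.
Import B.

Section D.
Context {R : realFieldType}.

Lemma sum_rev n (f : nat -> R) :
  \sum_(0 <= i < n.+1) f i = \sum_(0 <= i < n.+1) f (n - i)%N.
Proof. by rewrite big_nat_rev; apply: eq_big_nat => i _; rewrite add0n subSS. Qed.

Lemma sum_anti K (g : nat -> nat -> R) : (forall a b, g a b = - g b a) ->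
  \sum_(0 <= q < K.+1) g (K - q)%N q = 0.
Proof.
move=> hg; set S := \sum_(0 <= q < K.+1) g (K - q)%N q.
have : S = - S.
  rewrite {1}/S sum_rev /S -sumrN; apply: eq_big_nat => q /andP[_ hq].
  by rewrite hg (_ : (K - (K - q) = q)%N) //; lia.
move=> h; have : 2 * S = 0 by rewrite mulr2n mulrDl mul1r {2}h subrr.
by move/eqP; rewrite mulf_eq0 pnatr_eq0 /= => /eqP.
Qed.

Lemma sum_cut c b (f : nat -> R) : (b <= c)%N ->
  \sum_(0 <= i < b) f i = \sum_(0 <= i < c) (if (i < b)%N then f i else 0).
Proof. by move=> hbc; rewrite (big_nat_widen _ _ _ _ _ hbc) big_mkcond. Qed.

Lemma step1 n m r (D : nat -> nat -> nat -> R) :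
  (forall p q r, D p q r = - D q p r) -> (r <= m)%N ->
  \sum_(0 <= q < n.+1) D (n + m - r - q)%N q r =
  - \sum_(0 <= q < (n + m).+1)
      (if (n < q)%N && (q < (n + m - r).+1)%N then D (n + m - r - q)%N q r else 0).
Proof.
move=> h1 hr.
set X := fun q => D (n + m - r - q)%N q r.
have e1 : \sum_(0 <= q < (n + m - r).+1) X q = 0.
  exact: (sum_anti (n + m - r) (fun a b => D a b r) (fun a b => h1 a b r)).
have ea : \sum_(0 <= q < (n + m).+1)
      (if (n < q)%N && (q < (n + m - r).+1)%N then X q else 0)
   = \sum_(0 <= q < (n + m - r).+1) (if (n < q)%N then X q else 0).
  rewrite (sum_cut (n + m).+1 (n + m - r).+1); last by lia.
  apply: eq_big_nat => q _.
  by case: (n < q)%N; case: (q < (n + m - r).+1)%N.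
have eb : \sum_(0 <= q < n.+1) X q =
   \sum_(0 <= q < (n + m - r).+1) (if (q < n.+1)%N then X q else 0).
  by rewrite (sum_cut (n + m - r).+1); last by lia.
have ec : \sum_(0 <= q < (n + m - r).+1) X q =
   \sum_(0 <= q < (n + m - r).+1) (if (q < n.+1)%N then X q else 0) +
   \sum_(0 <= q < (n + m - r).+1) (if (n < q)%N then X q else 0).
  rewrite -big_split; apply: eq_big_nat => q _ /=.
  case: ifP => h; case: ifP => h'; rewrite ?addr0 ?add0r //; lia.
rewrite ea eb; move: ec; rewrite e1 => /eqP; rewrite eq_sym addr_eq0 => /eqP //.
Qed.

Lemma step2 n m q (D : nat -> nat -> nat -> R) :
  (forall p q r, D p q r = - D r q p) -> (q <= n + m)%N ->
  \sum_(0 <= r < m.+1)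
      (if (n < q)%N && (q < (n + m - r).+1)%N then D (n + m - r - q)%N q r else 0) = 0.
Proof.
move=> h2 hqs; case: (ltnP n q) => hq /=; last by rewrite big1.
have e := sum_anti (n + m - q) (fun a b => D a q b) (fun a b => h2 a q b).
apply: (etrans _ e); rewrite [RHS](sum_cut m.+1); last by lia.
apply: eq_big_nat => r /andP[_ hr].
rewrite (_ : (q < (n + m - r).+1)%N = (r < (n + m - q).+1)%N); last first.
  by apply/idP/idP => ?; lia.
by case: ifP => // h; congr D; lia.
Qed.

Lemma main_sum n m (D : nat -> nat -> nat -> R) :
  (forall p q r, D p q r = - D q p r) -> (forall p q r, D p q r = - D r q p) ->
  \sum_(0 <= i < n.+1) \sum_(0 <= a < m.+1) D (i + a)%N (n - i)%N (m - a)%N = 0.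
Proof.
move=> h1 h2.
rewrite sum_rev.
transitivity (\sum_(0 <= q < n.+1) \sum_(0 <= r < m.+1) D (n + m - r - q)%N q r).
  apply: eq_big_nat => q /andP[_ hq]; rewrite sum_rev.
  apply: eq_big_nat => r /andP[_ hr].
  by congr D; lia.
rewrite exchange_big /=.
transitivity (\sum_(0 <= r < m.+1) - \sum_(0 <= q < (n + m).+1)
      (if (n < q)%N && (q < (n + m - r).+1)%N then D (n + m - r - q)%N q r else 0)).
  apply: eq_big_nat => r /andP[_ hr]; apply: step1 => //.
rewrite sumrN exchange_big /=.
rewrite (eq_big_nat _ _ (F2 := fun _ => 0)) ?big1_eq ?oppr0 //.
move=> q /andP[_ hq]; apply: step2 => //.
Qed.


Lemma rev2l n m (f : nat -> nat -> R) :
  \sum_(0 <= i < n.+1) \sum_(0 <= a < m.+1) f i a =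
  \sum_(0 <= i < n.+1) \sum_(0 <= a < m.+1) f (n - i)%N a.
Proof. by rewrite sum_rev. Qed.
Lemma rev2r n m (f : nat -> nat -> R) :
  \sum_(0 <= i < n.+1) \sum_(0 <= a < m.+1) f i a =
  \sum_(0 <= i < n.+1) \sum_(0 <= a < m.+1) f i (m - a)%N.
Proof. by apply: eq_bigr => i _; rewrite sum_rev. Qed.

Lemma sym4 n m (g : nat -> nat -> nat -> nat -> R) :
  4 * \sum_(0 <= i < n.+1) \sum_(0 <= a < m.+1) g i (n - i)%N a (m - a)%N =
  \sum_(0 <= i < n.+1) \sum_(0 <= a < m.+1)
    (g i (n - i)%N a (m - a)%N + g (n - i)%N i a (m - a)%N
     + g i (n - i)%N (m - a)%N a + g (n - i)%N i (m - a)%N a).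
Proof.
have e1 : \sum_(0 <= i < n.+1) \sum_(0 <= a < m.+1) g i (n - i)%N a (m - a)%N =
  \sum_(0 <= i < n.+1) \sum_(0 <= a < m.+1) g (n - i)%N i a (m - a)%N.
  rewrite rev2l; apply: eq_big_nat => i /andP[_ hi].
  by rewrite (_ : (n - (n - i) = i)%N) //; lia.
have e2 : \sum_(0 <= i < n.+1) \sum_(0 <= a < m.+1) g i (n - i)%N a (m - a)%N =
  \sum_(0 <= i < n.+1) \sum_(0 <= a < m.+1) g i (n - i)%N (m - a)%N a.
  rewrite rev2r; apply: eq_bigr => i _; apply: eq_big_nat => a /andP[_ ha].
  by rewrite (_ : (m - (m - a) = a)%N) //; lia.
have e3 : \sum_(0 <= i < n.+1) \sum_(0 <= a < m.+1) g i (n - i)%N a (m - a)%N =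
  \sum_(0 <= i < n.+1) \sum_(0 <= a < m.+1) g (n - i)%N i (m - a)%N a.
  rewrite e2 rev2l; apply: eq_big_nat => i /andP[_ hi].
  by rewrite (_ : (n - (n - i) = i)%N) //; lia.
under [RHS]eq_bigr do rewrite !big_split /=.
rewrite !big_split /= -e1 -e2 -e3; ring.
Qed.

Lemma four_sums n m (D : nat -> nat -> nat -> R) :
  (forall p q r, D p q r = - D q p r) -> (forall p q r, D p q r = - D r q p) ->
  \sum_(0 <= i < n.+1) \sum_(0 <= a < m.+1)
    (D (i + a)%N (n - i)%N (m - a)%N + D (i + (m - a))%N (n - i)%N a
     + D ((n - i) + a)%N i (m - a)%N + D ((n - i) + (m - a))%N i a) = 0.
Proof.
move=> h1 h2; have h0 := main_sum n m D h1 h2.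
under eq_bigr do rewrite !big_split /=.
rewrite !big_split /= h0.
have e2 : \sum_(0 <= i < n.+1) \sum_(0 <= a < m.+1) D (i + (m - a))%N (n - i)%N a = 0.
  rewrite rev2r -{}[RHS]h0; apply: eq_bigr => i _; apply: eq_big_nat => a /andP[_ ha].
  by rewrite (_ : (m - (m - a) = a)%N) //; lia.
have e3 : \sum_(0 <= i < n.+1) \sum_(0 <= a < m.+1) D ((n - i) + a)%N i (m - a)%N = 0.
  rewrite rev2l -{}[RHS]h0; apply: eq_big_nat => i /andP[_ hi].
  by rewrite (_ : (n - (n - i) = i)%N) //; lia.
have e4 : \sum_(0 <= i < n.+1) \sum_(0 <= a < m.+1) D ((n - i) + (m - a))%N i a = 0.
  rewrite rev2l rev2r -{}[RHS]h0; apply: eq_big_nat => i /andP[_ hi].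
  apply: eq_big_nat => a /andP[_ ha].
  have e : (n - (n - i) = i)%N by lia.
  have e' : (m - (m - a) = a)%N by lia.
  by rewrite e e'.
by rewrite e2 e3 e4; ring.
Qed.

Lemma Qform k l (V W : nat -> R) :
  \sum_(0 <= i < k) (V i * W (k - 1 - i + l)%N - W (k - 1 - i)%N * V (i + l)%N) =
  \sum_(0 <= i < k) V i * W (k + l - 1 - i)%N + \sum_(0 <= i < l) V i * W (k + l - 1 - i)%N
  - \sum_(0 <= i < k + l) V i * W (k + l - 1 - i)%N.
Proof.
rewrite sumrB.
have -> : \sum_(0 <= i < k) V i * W (k - 1 - i + l)%N =
          \sum_(0 <= i < k) V i * W (k + l - 1 - i)%N.
  by apply: eq_big_nat => i /andP[_ hi]; rewrite (_ : (k - 1 - i + l = k + l - 1 - i)%N) //; lia.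
rewrite (big_cat_nat (n := l) (m := 0) (p := k + l)) /=; [|exact: leq0n|exact: leq_addl].
have -> : \sum_(l <= i < k + l) V i * W (k + l - 1 - i)%N =
          \sum_(0 <= i < k) W (k - 1 - i)%N * V (i + l)%N.
  rewrite -{1}(add0n l) big_addn (_ : (k + l - l = k)%N); last by lia.
  apply: eq_big_nat => i /andP[_ hi]; rewrite mulrC; congr (_ * _); congr W; lia.
ring.
Qed.

Lemma Qsym k l (V W : nat -> R) :
  \sum_(0 <= i < k) (V i * W (k - 1 - i + l)%N - W (k - 1 - i)%N * V (i + l)%N) =
  \sum_(0 <= i < l) (V i * W (l - 1 - i + k)%N - W (l - 1 - i)%N * V (i + k)%N).
Proof. rewrite !Qform (addnC l k); ring. Qed.

End D.

End D.
Import D.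

Module E.
Import A.
Import B.
Import D.

Section E.
Context {R : realType} {N : nat} {lam mu : 'I_N -> R}.
Hypothesis hmu : forall j, mu j != 0.
Local Notation st := (state R N).
Local Notation u := (@uf R N lam mu).
Local Notation v := (@vf R N lam mu).
Local Notation w := (@wf R N lam mu).
Local Notation K := (@K R N lam mu).
Local Notation T := (@T R N lam mu).
Local Notation pb := (@pb R N mu).

Definition Cs k (z : st) := \sum_(1 <= i < k) K i.-1 (k - i).-1 z.

Lemma Fint_eq k z : (1 <= k)%N -> Fint lam mu k z = 4 * Cs k z - 8 * u k.-1 z.
Proof.
move=> hk; rewrite /Fint /Cs /K /uf /vf /wf.
case: (eqVneq k 1%N) => [->|hk1] /=; first by rewrite big_geq //; ring.
congr (4 * _ - _); apply: eq_bigr => i _; ring.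
Qed.

Lemma Cs_shift k z : Cs k.+1 z = \sum_(0 <= i < k) K i (k - 1 - i)%N z.
Proof.
rewrite /Cs big_add1 /=; apply: eq_big_nat => i /andP[_ hi].
congr K; lia.
Qed.

Lemma smooth_Cs k : smooth (Cs k).
Proof.
have h := proj1 (sum_ext_smooth _ (index_iota 1 k) (fun _ => true)
   (fun i => K i.-1 (k - i).-1) (fun i _ => smooth_K _ _)).
exact: h.
Qed.

Lemma pb_CC n m z : pb (Cs n.+2) (Cs m.+2) z = 0.
Proof.
rewrite (pb_extL _ _ _ _ (Cs_shift n.+1)) (pb_extR _ _ _ _ (Cs_shift m.+1)).
rewrite pb_sumL; last by move=> i _; exact: smooth_K.
under eq_bigr do rewrite (pb_sumR _ _ _ _ _ _ (fun a _ => smooth_K _ _)).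
transitivity (\sum_(0 <= i < n.+1) \sum_(0 <= a < m.+1) pb (K i (n - i)) (K a (m - a)) z).
  apply: eq_big_nat => i /andP[_ hi]; apply: eq_big_nat => a /andP[_ ha].
  have -> : (n.+1 - 1 - i = n - i)%N by lia.
  by have -> : (m.+1 - 1 - a = m - a)%N by lia.
have e : \sum_(0 <= i < n.+1) \sum_(0 <= a < m.+1)
    (pb (K i (n - i)) (K a (m - a)) z + pb (K (n - i) i) (K a (m - a)) z
     + pb (K i (n - i)) (K (m - a) a) z + pb (K (n - i) i) (K (m - a) a) z) = 0.
  transitivity (\sum_(0 <= i < n.+1) \sum_(0 <= a < m.+1)
    (-4) * (T (i + a) (n - i) (m - a) z + T (i + (m - a)) (n - i) a z
     + T ((n - i) + a) i (m - a) z + T ((n - i) + (m - a)) i a z)).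
    by apply: eq_bigr => i _; apply: eq_bigr => a _; rewrite Ksym.
  under eq_bigr do rewrite -mulr_sumr.
  rewrite -mulr_sumr (four_sums n m (fun p q r => T p q r z)) ?mulr0 //.
    by move=> p q r; rewrite /B.T; ring.
  by move=> p q r; rewrite /B.T; ring.
have := sym4 n m (fun i j a b => pb (K i j) (K a b) z).
rewrite /= e => /eqP; rewrite mulf_eq0 pnatr_eq0 /= => /eqP //.
Qed.


Lemma Cs1 z : Cs 1 z = 0.
Proof. by rewrite /Cs big_geq. Qed.

Lemma pb_CC' k l z : pb (Cs k.+1) (Cs l.+1) z = 0.
Proof.
case: k => [|n]; first by rewrite (pb_extL _ _ _ _ Cs1) pb_constL.
case: l => [|m]; first by rewrite (pb_extR _ _ _ _ Cs1) pb_constR.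
exact: pb_CC.
Qed.

Lemma pb_Ku i j c z : pb (K i j) (u c) z = 2 * (v i z * w (j + c) z - w j z * v (i + c) z).
Proof.
rewrite /B.K pb_addL; [|exact: smooth_uu|exact: smooth_2vw].
rewrite pb_scaleL; last exact: smooth_vw.
rewrite (pb_mulL (u i) (u j) (u c) z (smooth_u i) (smooth_u j)).
rewrite (pb_mulL (v i) (w j) (u c) z (smooth_v i) (smooth_w j)).
rewrite !(pb_uu hmu) (pb_wu hmu) (pb_vu hmu); ring.
Qed.

Lemma pb_Csu k c z : pb (Cs k.+1) (u c) z =
  2 * \sum_(0 <= i < k) (v i z * w (k - 1 - i + c)%N z - w (k - 1 - i)%N z * v (i + c)%N z).
Proof.
rewrite (pb_extL _ _ _ _ (Cs_shift k)) pb_sumL; last by move=> i _; exact: smooth_K.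
rewrite mulr_sumr; apply: eq_bigr => i _; exact: pb_Ku.
Qed.

Definition Fs k (z : st) := 4 * Cs k.+1 z - 8 * u k z.

Lemma smooth_Fs k : smooth (Fs k).
Proof.
apply: smooth_sub.
  by apply: smooth_mul; [exact: smooth_const|exact: smooth_Cs].
by apply: smooth_mul; [exact: smooth_const|exact: smooth_u].
Qed.

Lemma Fint_Fs k z : Fint lam mu k.+1 z = Fs k z.
Proof. by rewrite Fint_eq. Qed.

Lemma pb_FsG k G z : pb (Fs k) G z = 4 * pb (Cs k.+1) G z - 8 * pb (u k) G z.
Proof.
rewrite /Fs pb_subL; first last.
- by apply: smooth_mul; [exact: smooth_const|exact: smooth_u].
- by apply: smooth_mul; [exact: smooth_const|exact: smooth_Cs].
rewrite pb_scaleL; last exact: smooth_Cs.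
by rewrite pb_scaleL; last exact: smooth_u.
Qed.

Lemma pb_GFs k G z : pb G (Fs k) z = 4 * pb G (Cs k.+1) z - 8 * pb G (u k) z.
Proof. by rewrite pb_anti pb_FsG (pb_anti G) (pb_anti G); ring. Qed.

Lemma pb_FsFs k l z : pb (Fs k) (Fs l) z = 0.
Proof.
rewrite pb_FsG !pb_GFs (pb_anti (Cs l.+1) (u k)) pb_CC' (pb_uu hmu) !pb_Csu.
have hq := Qsym k l (fun i => v i z) (fun i => w i z); simpl in hq.
rewrite hq; ring.
Qed.

Lemma pb_Fsu0 k z : pb (Fs k) (u 0) z = 0.
Proof.
rewrite pb_FsG (pb_uu hmu) pb_Csu big1; first ring.
by move=> i _; rewrite !addn0; ring.
Qed.

Local Notation ip k a b := (fun z => @ipAB R N lam mu k z a b).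

Lemma sum_deltaI (T' : finType) (a : T') (f : T' -> R) : \sum_i (a == i)%:R * f i = f a.
Proof.
rewrite (bigD1 a) //= eqxx mul1r big1 ?addr0 // => i ai.
by rewrite eq_sym (negbTE ai) mul0r.
Qed.

Lemma pb_ip_P k a b i j z : pb (ip k a b) (fun z => z.1 i j) z = (b == i)%:R * (lam j ^+ k * z.1 a j).
Proof.
rewrite /A.pb.
transitivity (\sum_i' \sum_j' ((i == i') && (j == j'))%:R * ((mu j')^-1 * dq (ip k a b) z i' j')).
  by apply: eq_bigr => i' _; apply: eq_bigr => j' _; rewrite dp_P dq_P; ring.
rewrite (sum_delta2 (fun i' j' => (mu j')^-1 * dq (ip k a b) z i' j')) dq_ip.
field; exact: hmu.
Qed.

Lemma pb_ip_Q k a b i j z : pb (ip k a b) (fun z => z.2 i j) z = - ((a == i)%:R * (lam j ^+ k * z.2 b j)).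
Proof.
rewrite /A.pb.
transitivity (\sum_i' \sum_j' ((i == i') && (j == j'))%:R * (- (mu j')^-1 * dp (ip k a b) z i' j')).
  by apply: eq_bigr => i' _; apply: eq_bigr => j' _; rewrite dq_Q dp_Q; ring.
rewrite (sum_delta2 (fun i' j' => - (mu j')^-1 * dp (ip k a b) z i' j')) dp_ip.
field; exact: hmu.
Qed.

Lemma smooth_PQ i j : smooth (fun z : st => z.1 i j * z.2 i j).
Proof. apply: smooth_mul; [exact: smooth_P|exact: smooth_Q]. Qed.

Lemma pb_ip_Fbar k a b j z : pb (ip k a b) (Fbar j) z = 0.
Proof.
rewrite /Fbar (pb_sumR _ _ _ _ _ _ (fun i _ => smooth_PQ i j)).
transitivity (\sum_(i < 3) ((b == i)%:R * (z.2 i j * (lam j ^+ k * z.1 a j))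
                            - (a == i)%:R * (z.1 i j * (lam j ^+ k * z.2 b j)))).
  apply: eq_bigr => i _.
  rewrite (pb_mulR _ (fun z => z.1 i j) (fun z => z.2 i j) z (smooth_P i j) (smooth_Q i j)).
  rewrite pb_ip_P pb_ip_Q; ring.
rewrite sumrB !sum_deltaI; ring.
Qed.

Section Annihilate.
Variables (G : st -> R) (z : st).
Hypothesis hG : forall k a b, pb (ip k a b) G z = 0.

Lemma ann_u k : pb (u k) G z = 0.
Proof. by rewrite /uf pb_subL ?hG ?subrr //; exact: smooth_ip. Qed.
Lemma ann_v k : pb (v k) G z = 0.
Proof. by rewrite /vf pb_addL ?hG ?addr0 //; exact: smooth_ip. Qed.
Lemma ann_w k : pb (w k) G z = 0.
Proof. by rewrite /wf pb_addL ?hG ?addr0 //; exact: smooth_ip. Qed.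
Lemma ann_K i j : pb (K i j) G z = 0.
Proof.
rewrite /B.K pb_addL; [|exact: smooth_uu|exact: smooth_2vw].
rewrite pb_scaleL; last exact: smooth_vw.
rewrite (pb_mulL (u i) (u j) G z (smooth_u i) (smooth_u j)).
rewrite (pb_mulL (v i) (w j) G z (smooth_v i) (smooth_w j)).
rewrite !ann_u ann_v ann_w; ring.
Qed.
Lemma ann_Fs k : pb (Fs k) G z = 0.
Proof.
rewrite pb_FsG ann_u (pb_extL _ _ _ _ (Cs_shift k)) pb_sumL; last by move=> i _; exact: smooth_K.
rewrite big1 ?mulr0 ?subrr // => i _; exact: ann_K.
Qed.
End Annihilate.

Lemma good_K i j : good (K i j).
Proof.
apply: good_add; first by apply: good_mul; exact: good_u.
apply: good_mul; first exact: good_const.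
by apply: good_mul; [exact: good_v|exact: good_w].
Qed.

Lemma good_Fs k : good (Fs k).
Proof.
apply: good_sub.
  apply: good_mul; first exact: good_const.
  by apply: good_sum => i _; exact: good_K.
by apply: good_mul; [exact: good_const|exact: good_u].
Qed.

End E.

End E.
Import E.

Module F.
Import A.
Import B.
Import D.
Import E.

Section F.
Context {R : realType} {N : nat} {lam mu : 'I_N -> R}.
Hypothesis hmu : forall j, mu j != 0.
Local Notation st := (state R N).
Local Notation u := (@uf R N lam mu).
Local Notation v := (@vf R N lam mu).
Local Notation w := (@wf R N lam mu).
Local Notation K := (@K R N lam mu).
Local Notation pb := (@pb R N mu).
Local Notation Fs := (@Fs R N lam mu).
Local Notation Cs := (@Cs R N lam mu).
Local Notation ip k a b := (fun z => @ipAB R N lam mu k z a b).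

Lemma sum3 (f : 'I_3 -> R) : \sum_(k < 3) f k = f i1 + f i2 + f i3.
Proof.
rewrite !big_ord_recl big_ord0 addr0 !addrA.
by congr (f _ + f _ + f _); apply: val_inj.
Qed.

Lemma ord3 (i : 'I_3) : i = i1 \/ i = i2 \/ i = i3.
Proof.
case: i => [[|[|[|k]]] hk].
- by left; apply: val_inj.
- by right; left; apply: val_inj.
- by right; right; apply: val_inj.
- by [].
Qed.

Lemma e12 : (i1 == i2) = false. Proof. by []. Qed.
Lemma e13 : (i1 == i3) = false. Proof. by []. Qed.
Lemma e21 : (i2 == i1) = false. Proof. by []. Qed.
Lemma e23 : (i2 == i3) = false. Proof. by []. Qed.
Lemma e31 : (i3 == i1) = false. Proof. by []. Qed.
Lemma e32 : (i3 == i2) = false. Proof. by []. Qed.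

Lemma innerPQ z a b : inner (Pv z a) (diagM mu *m Qv z b) = ipAB lam mu 0 z a b.
Proof. rewrite innerB ipABE; apply: eq_bigr => j _; rewrite !mxE expr0; ring. Qed.

Lemma qtE z : qt mu z = Num.sqrt 2 * v 0 z.
Proof. by rewrite /qt !innerPQ. Qed.
Lemma rtE z : rt mu z = Num.sqrt 2 * w 0 z.
Proof. by rewrite /rt !innerPQ. Qed.

Lemma s2 : Num.sqrt 2 * Num.sqrt 2 = 2 :> R.
Proof. by rewrite -expr2 sqr_sqrtr // ler0n. Qed.

Lemma dq_sub (F G : st -> R) z i j : smooth F -> smooth G ->
  dq (fun z => F z - G z) z i j = dq F z i j - dq G z i j.
Proof.
move=> hF hG; rewrite dq_add; [|exact: hF|exact: smooth_opp hG].
rewrite (dq_ext (fun z => - G z) (fun z => -1 * G z)); last by move=> y; ring.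
rewrite dq_mul; [|exact: smooth_const|exact: hG].
rewrite dq_const; ring.
Qed.
Lemma dp_sub (F G : st -> R) z i j : smooth F -> smooth G ->
  dp (fun z => F z - G z) z i j = dp F z i j - dp G z i j.
Proof.
move=> hF hG; rewrite dp_add; [|exact: hF|exact: smooth_opp hG].
rewrite (dp_ext (fun z => - G z) (fun z => -1 * G z)); last by move=> y; ring.
rewrite dp_mul; [|exact: smooth_const|exact: hG].
rewrite dp_const; ring.
Qed.


Lemma dq_u k z i j : dq (u k) z i j =
  (i1 == i)%:R * (lam j ^+ k * mu j * z.1 i1 j) - (i3 == i)%:R * (lam j ^+ k * mu j * z.1 i3 j).
Proof. by rewrite /uf dq_sub ?dq_ip //; exact: smooth_ip. Qed.
Lemma dp_u k z i j : dp (u k) z i j =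
  (i1 == i)%:R * (lam j ^+ k * mu j * z.2 i1 j) - (i3 == i)%:R * (lam j ^+ k * mu j * z.2 i3 j).
Proof. by rewrite /uf dp_sub ?dp_ip //; exact: smooth_ip. Qed.
Lemma dq_v k z i j : dq (v k) z i j =
  (i2 == i)%:R * (lam j ^+ k * mu j * z.1 i1 j) + (i3 == i)%:R * (lam j ^+ k * mu j * z.1 i2 j).
Proof. by rewrite /vf dq_add ?dq_ip //; exact: smooth_ip. Qed.
Lemma dp_v k z i j : dp (v k) z i j =
  (i1 == i)%:R * (lam j ^+ k * mu j * z.2 i2 j) + (i2 == i)%:R * (lam j ^+ k * mu j * z.2 i3 j).
Proof. by rewrite /vf dp_add ?dp_ip //; exact: smooth_ip. Qed.
Lemma dq_w k z i j : dq (w k) z i j =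
  (i1 == i)%:R * (lam j ^+ k * mu j * z.1 i2 j) + (i2 == i)%:R * (lam j ^+ k * mu j * z.1 i3 j).
Proof. by rewrite /wf dq_add ?dq_ip //; exact: smooth_ip. Qed.
Lemma dp_w k z i j : dp (w k) z i j =
  (i2 == i)%:R * (lam j ^+ k * mu j * z.2 i1 j) + (i3 == i)%:R * (lam j ^+ k * mu j * z.2 i2 j).
Proof. by rewrite /wf dp_add ?dp_ip //; exact: smooth_ip. Qed.

Definition H (z : st) := 2 * u 1 z + (-2) * (v 0 z * w 0 z).

Lemma smooth_H : smooth H.
Proof.
apply: smooth_add.
  by apply: smooth_mul; [exact: smooth_const|exact: smooth_u].
by apply: smooth_mul; [exact: smooth_const|exact: smooth_vw].
Qed.

Lemma dq_H z i j : dq H z i j =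
  2 * dq (u 1) z i j + (-2) * (dq (v 0) z i j * w 0 z + v 0 z * dq (w 0) z i j).
Proof.
rewrite /H dq_add; first last.
- by apply: smooth_mul; [exact: smooth_const|exact: smooth_vw].
- by apply: smooth_mul; [exact: smooth_const|exact: smooth_u].
rewrite dq_mul; [|exact: smooth_const|exact: smooth_u].
rewrite dq_mul; [|exact: smooth_const|exact: smooth_vw].
rewrite dq_mul; [|exact: smooth_v|exact: smooth_w].
rewrite !dq_const; ring.
Qed.
Lemma dp_H z i j : dp H z i j =
  2 * dp (u 1) z i j + (-2) * (dp (v 0) z i j * w 0 z + v 0 z * dp (w 0) z i j).
Proof.
rewrite /H dp_add; first last.
- by apply: smooth_mul; [exact: smooth_const|exact: smooth_vw].
- by apply: smooth_mul; [exact: smooth_const|exact: smooth_u].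
rewrite dp_mul; [|exact: smooth_const|exact: smooth_u].
rewrite dp_mul; [|exact: smooth_const|exact: smooth_vw].
rewrite dp_mul; [|exact: smooth_v|exact: smooth_w].
rewrite !dp_const; ring.
Qed.

Lemma phi_vel z i j :
  (Umat (qt mu z) (rt mu z) (lam j) *m phicol z j) i 0 = - (mu j)^-1 * dq H z i j.
Proof.
rewrite mxE sum3 !mxE qtE rtE dq_H dq_u dq_v dq_w.
have hj := hmu j.
case: (ord3 i) => [->|[->|->]]; rewrite ?eqxx ?e12 ?e13 ?e21 ?e23 ?e31 ?e32 /Uentry /=;
  rewrite !mulrA s2; field; exact: hj.
Qed.

Lemma psi_vel z i j :
  ((- (Umat (qt mu z) (rt mu z) (lam j))^T) *m psicol z j) i 0 = (mu j)^-1 * dp H z i j.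
Proof.
rewrite mxE sum3 !mxE qtE rtE dp_H dp_u dp_v dp_w.
have hj := hmu j.
case: (ord3 i) => [->|[->|->]]; rewrite ?eqxx ?e12 ?e13 ?e21 ?e23 ?e31 ?e32 /Uentry /=;
  rewrite !mulrA s2; field; exact: hj.
Qed.


Lemma H_eq z : H z = (- 4^-1) * Fs 1 z + u 0 z * u 0 z.
Proof.
rewrite /H /E.Fs (Cs_shift 1 z) big_nat1 /B.K /=.
field.
by [].
Qed.

Lemma pb_Fs_H k z : pb (Fs k) H z = 0.
Proof.
rewrite (pb_extR _ _ _ _ H_eq) pb_addR; first last.
- exact: smooth_uu.
- by apply: smooth_mul; [exact: smooth_const|exact: smooth_Fs].
rewrite pb_scaleR; last exact: smooth_Fs.
rewrite (pb_mulR _ (u 0) (u 0) z (smooth_u 0) (smooth_u 0)).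
rewrite (pb_FsFs hmu) (pb_Fsu0 hmu); ring.
Qed.

Lemma good_Fint m : (1 <= m)%N -> good (Fint lam mu m).
Proof.
case: m => // m _.
have -> : Fint lam mu m.+1 = Fs m by apply/funext => z; exact: Fint_Fs.
exact: good_Fs.
Qed.

Lemma integral_Fint m : (1 <= m)%N -> integral_of_motion lam mu (Fint lam mu m).
Proof.
move=> hm sol hs x y.
apply: (is_derive_0_is_cst (f := fun t => Fint lam mu m (sol t))) => t.
have co : curve_ok sol t.
  by move=> i j; case: (hs t i j) => [h1 [h2 _]]; split.
case: (proj2 (good_Fint m hm) sol t co) => d e.
have e0 : derive1 (fun t => Fint lam mu m (sol t)) t = 0.
  rewrite e; transitivity (pb (Fint lam mu m) H (sol t)).
    rewrite /A.pb; apply: eq_bigr => i _; apply: eq_bigr => j _.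
    case: (hs t i j) => [_ [_ [-> ->]]].
    rewrite phi_vel psi_vel; ring.
  case: m hm {d e} => // m _.
  by rewrite (pb_extL _ _ _ _ (Fint_Fs m)) pb_Fs_H.
have := derivableP d; rewrite -derive1E e0 //.
Qed.

Lemma invol_Fint k l z : (1 <= k)%N -> (1 <= l)%N ->
  pbracket mu (Fint lam mu k) (Fint lam mu l) z = 0.
Proof.
case: k => // k _; case: l => // l _.
rewrite pbE (pb_extL _ _ _ _ (Fint_Fs k)) (pb_extR _ _ _ _ (Fint_Fs l)).
exact: pb_FsFs.
Qed.

Lemma invol_Fbar m j z : (1 <= m)%N -> pbracket mu (Fint lam mu m) (Fbar j) z = 0.
Proof.
case: m => // m _.
rewrite pbE (pb_extL _ _ _ _ (Fint_Fs m)).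
apply: ann_Fs => k a b; exact: pb_ip_Fbar.
Qed.

End F.


End F.
Import F.


Theorem theorem3p2 (R : realType) (N : nat) (lam mu : 'I_N -> R)
  (hN : (1 <= N)%N)
  (hlam : injective lam)
  (hmu : forall j, mu j != 0) :
  (forall m : nat, (1 <= m)%N -> integral_of_motion lam mu (Fint lam mu m))
  /\ (forall k l : nat, (1 <= k)%N -> (1 <= l)%N ->
        forall z : state R N, pbracket mu (Fint lam mu k) (Fint lam mu l) z = 0)
  /\ (forall (m : nat) (j : 'I_N), (1 <= m)%N ->
        forall z : state R N, pbracket mu (Fint lam mu m) (Fbar j) z = 0).
Proof.
split; first by move=> m hm; exact: (integral_Fint hmu).
split; first by move=> k l hk hl z; exact: (invol_Fint hmu).
by move=> m j hm z; exact: (invol_Fbar hmu).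
Qed.
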